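(* Let $G$ be the corresponding graph of an array $A$ with reach one, let $F$ be a resulting DFS forest of $G$, merge the sub-trees of $F$, apply the merge step with the roots of $F$ to obtain $H$ and root list $R$, and let $F'$ be the resulting DFS forest of $H$ with visiting list $R$. Let $H'$ and $R'$ be the graph and root list obtained by applying the merge step to $F'$ with root list $R$. If we run DFS on $H'$ with visiting list $R'$, then all components of the resulting DFS forest are directed paths.
   Context: An array is a finite sequence $A=(A[1],\dots,A[n])$ of pairwise distinct real numbers. A comparison graph on $A$ is a directed graph on $\{1,\dots,n\}$ all of whose arcs $(u,v)$ satisfy $A[u]<A[v]$. The corresponding graph of $A$ with reach one has an arc $(i,j)$ whenever $j\equiv i\pm1\pmod n$, $j\ne i$, and $A[i]<A[j]$. Components are connected components of the underlying undirected graph. DFS: adjacency lists sorted in increasing $A$-value; given a visiting list $(l_1,\dots,l_m)$ (for $F$, some ordering of all vertices), for each unvisited $l_t$ call Visit$(l_t)$, where Visit$(u)$ marks $u$ and, for each out-neighbour $w$ of $u$ in increasing $A$-value that is unvisited, sets parent$(w)=u$ and calls Visit$(w)$. The resulting DFS forest has arcs $(\mathrm{parent}(w),w)$; its roots are the vertices without parent. Merging the sub-trees of $F$: for each component of $F$ whose root has exactly two children $a_1,b_1$, set $p=a_1,q=b_1$ and, while both are defined: if $A[p]<A[q]$ add $(p,q)$ and replace $p$ by its smallest-valued child in $F$ (undefined if none); else add $(q,p)$ and replace $q$ likewise. Component merge of components $C,D$: set $p,q$ to the minimum-valued vertices of $C,D$; while both defined: if $A[p]<A[q]$ add $(p,q)$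 and replace $p$ by the smallest-valued out-neighbour of $p$ within $C$ (ignoring arcs added in this merge; undefined if none); else add $(q,p)$ and replace $q$ analogously in $D$. Merge step with root list $(\rho_1,\dots,\rho_k)$ (the minimum-valued vertices of the components): component-merge the components of $\rho_{2j-1},\rho_{2j}$ for $j=1,\dots,\lfloor k/2\rfloor$ and return the list obtained by deleting the larger-valued root of each merged pair. *)

(* Defs.v *)
From HB Require Import structures.
From mathcomp Require Import all_boot all_order all_algebra.
From mathcomp Require Import reals.
Set Implicit Arguments. Unset Strict Implicit. Unset Printing Implicit Defensive.
Import Order.TTheory GRing.Theory Num.Theory.
Local Open Scope ring_scope.

(* Vertices {1,...,n} of the paper are represented by 'I_n = {0,...,n-1}.
   A directed graph on them is a finite set of arcs {set 'I_n * 'I_n}. *)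

Section Alg.
Variables (R : realType) (n : nat) (A : 'I_n -> R).

Definition arcs := {set 'I_n * 'I_n}.

Definition leA (x y : 'I_n) : bool := A x <= A y.
Definition sortA (s : seq 'I_n) : seq 'I_n := sort leA s.

Definition reach_one_graph : arcs :=
  [set e : 'I_n * 'I_n |
     [&& ((val e.2 == (val e.1 + 1) %% n)%N || ((val e.2 + 1) %% n == val e.1)%N),
         e.2 != e.1 & A e.1 < A e.2]].

Definition outs (E : arcs) (u : 'I_n) : seq 'I_n :=
  sortA [seq w <- enum 'I_n | (u, w) \in E].

(* DFS state: (visited vertices, arcs (parent(w), w) of the forest) *)
Definition vstate := ({set 'I_n} * arcs)%type.

(* Visit(u); the fuel bounds the recursion depth, and fuel n suffices since
   every nested call is on a fresh (unvisited) vertex. *)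
Fixpoint visit (E : arcs) (fuel : nat) (u : 'I_n) (st : vstate) : vstate :=
  match fuel with
  | 0 => st
  | f.+1 =>
      foldl (fun (st' : vstate) (w : 'I_n) =>
               if w \in st'.1 then st'
               else visit E f w (st'.1, (u, w) |: st'.2))
            (u |: st.1, st.2) (outs E u)
  end.

Definition dfs_forest (E : arcs) (L : seq 'I_n) : arcs * seq 'I_n :=
  let step (acc : vstate * seq 'I_n) (l : 'I_n) :=
    if l \in acc.1.1 then acc else (visit E n l acc.1, rcons acc.2 l) in
  let res := foldl step ((set0, set0), [::]) L in
  (res.1.2, res.2).

Definition children (F : arcs) (v : 'I_n) : seq 'I_n :=
  [seq w <- enum 'I_n | (v, w) \in F].
Definition minchild (F : arcs) (v : 'I_n) : option 'I_n :=
  ohead (sortA (children F v)).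

(* Each iteration moves p (resp. q)
   to a vertex of strictly larger value in its own part, so fuel n suffices. *)
Fixpoint mchain (np nq : 'I_n -> option 'I_n) (fuel : nat) (p q : 'I_n)
    (acc : arcs) : arcs :=
  match fuel with
  | 0 => acc
  | f.+1 =>
      if A p < A q then
        let acc' := (p, q) |: acc in
        match np p with Some p' => mchain np nq f p' q acc' | None => acc' end
      else
        let acc' := (q, p) |: acc in
        match nq q with Some q' => mchain np nq f p q' acc' | None => acc' end
  end.

Definition merge_subtrees_arcs (F : arcs) (roots : seq 'I_n) : arcs :=
  \bigcup_(r <- roots)
     match children F r with
     | [:: a1; b1] => mchain (minchild F) (minchild F) n a1 b1 set0
     | _ => set0
     end.

Definition merge_subtrees (F : arcs) (roots : seq 'I_n) : arcs :=
  F :|: merge_subtrees_arcs F roots.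

Definition usym (E : arcs) : rel 'I_n := fun x y => ((x, y) \in E) || ((y, x) \in E).
Definition compnt (E : arcs) (x : 'I_n) : seq 'I_n :=
  [seq y <- enum 'I_n | connect (usym E) x y].
Definition cmin (E : arcs) (x : 'I_n) : 'I_n := head x (sortA (compnt E x)).
Definition nextin (E : arcs) (C : seq 'I_n) (p : 'I_n) : option 'I_n :=
  ohead (sortA [seq w <- outs E p | w \in C]).

Definition comp_merge (E : arcs) (r1 r2 : 'I_n) : arcs :=
  let C := compnt E r1 in let D := compnt E r2 in
  mchain (nextin E C) (nextin E D) n (cmin E r1) (cmin E r2) set0.

Fixpoint mstep (E : arcs) (rs : seq 'I_n) : arcs * seq 'I_n :=
  match rs with
  | r1 :: r2 :: rest =>
      let res := mstep E rest in
      (comp_merge E r1 r2 :|: res.1,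
       (if A r1 < A r2 then r1 else r2) :: res.2)
  | _ => (set0, rs)
  end.

Definition merge_step (E : arcs) (rs : seq 'I_n) : arcs * seq 'I_n :=
  let res := mstep E rs in (E :|: res.1, res.2).

End Alg.

Definition component_is_dipath (n : nat) (E : {set 'I_n * 'I_n}) (v : 'I_n) : Prop :=
  exists s : seq 'I_n,
    [/\ uniq s,
        (forall x, (x \in s) = connect (usym E) v x) &
        (forall x y, x \in s ->
           ((x, y) \in E <->
            exists i, [/\ (i.+1 < size s)%N, nth v s i = x & nth v s i.+1 = y]))].

Definition all_components_dipaths (n : nat) (E : {set 'I_n * 'I_n}) : Prop :=
  forall v : 'I_n, component_is_dipath E v.

(* Main.v *)
Require Import Defs.
From HB Require Import structures.
From mathcomp Require Import all_boot all_order all_algebra.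
From mathcomp Require Import reals.
Set Implicit Arguments. Unset Strict Implicit. Unset Printing Implicit Defensive.
Import Order.TTheory GRing.Theory Num.Theory.

Section Proof.
Local Open Scope ring_scope.
Variables (R : realType) (n : nat) (A : 'I_n -> R).
Hypothesis injA : injective A.
Variable x0 : 'I_n.

Notation le := (leA A).

Lemma le_trans_A : transitive le.
Proof. by move=> y x z; rewrite /leA; apply: le_trans. Qed.
Lemma le_total_A : total le.
Proof. by move=> x y; rewrite /leA le_total. Qed.
Lemma le_antiA x y : le x y -> le y x -> x = y.
Proof. by rewrite /leA => h1 h2; apply: injA; apply/eqP; rewrite eq_le h1 h2. Qed.
Lemma leA_lt x y : x != y -> le x y = (A x < A y).
Proof.
by move=> nxy; rewrite /leA le_eqVlt (inj_eq injA) (negbTE nxy).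
Qed.

Lemma sortA_head (s : seq 'I_n) m : m \in s -> (forall y, y \in s -> A m <= A y) ->
  exists t, sortA A s = m :: t.
Proof.
move=> ms hm.
have ss : sorted le (sortA A s) by apply: sort_sorted; exact: le_total_A.
have mem : sortA A s =i s by apply: mem_sort.
case E: (sortA A s) => [|h t].
  by move: ms; rewrite -mem E.
exists t; congr (_ :: _).
have hs : h \in s by rewrite -mem E mem_head.
move: ss; rewrite E => /(order_path_min le_trans_A) /allP ht.
have : m \in h :: t by rewrite -E mem.
rewrite in_cons => /orP [/eqP -> //|mt].
apply: le_antiA; first by apply: ht.
by apply: hm.
Qed.

Lemma sortA_nil (s : seq 'I_n) : (forall y, y \notin s) -> sortA A s = [::].
Proof. by case: s => [|y s] // /(_ y); rewrite mem_head. Qed.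

Fixpoint pairs (s : seq 'I_n) : {set 'I_n * 'I_n} :=
  match s with
  | x :: ((y :: _) as t) => (x, y) |: pairs t
  | _ => set0
  end.

Lemma pairs_cons2 x y t : pairs [:: x, y & t] = (x, y) |: pairs (y :: t).
Proof. by []. Qed.

Lemma pairs_cons x t : pairs t \subset pairs (x :: t).
Proof. by case: t => [|y t] //=; rewrite ?sub0set ?subsetUr. Qed.

Lemma mem_pairs s x y : (x, y) \in pairs s -> (x \in s) && (y \in s).
Proof.
elim: s => [|a t IH]; first by rewrite inE.
case: t IH => [|b t] IH; first by rewrite inE.
rewrite pairs_cons2 in_setU1 => /orP [/eqP [-> ->]|/IH /andP [h1 h2]].
  by rewrite mem_head in_cons mem_head orbT.
by rewrite in_cons h1 in_cons h2 !orbT.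
Qed.

Lemma pairs_cat pre s : pairs s \subset pairs (pre ++ s).
Proof.
elim: pre => [|a pre IH] //=; apply: subset_trans IH _; exact: pairs_cons.
Qed.

Lemma pairs_nth d s x y : (x, y) \in pairs s <->
  exists i, [/\ (i.+1 < size s)%N, nth d s i = x & nth d s i.+1 = y].
Proof.
elim: s => [|a [|b t] IH] /=.
- by rewrite inE; split=> // [[i []]].
- by rewrite inE; split=> // [[i []]].
rewrite in_setU1; split.
  case/orP=> [/eqP [-> ->]|/IH [i [h1 h2 h3]]]; first by exists 0%N.
  by exists i.+1.
case=> [[|i]] [/= h1 h2 h3]; first by rewrite h2 h3 eqxx.
by apply/orP; right; apply/IH; exists i.
Qed.

Definition cmp (E : arcs n) := forall x y, (x, y) \in E -> A x < A y.

Definition chainP (E : arcs n) (s : seq 'I_n) :=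
  [/\ sorted le s, uniq s, pairs s \subset E &
      forall x y, x \in s -> (x, y) \in E -> y \in s].

Lemma path_minA x s : path le x s -> forall y, y \in s -> A x <= A y.
Proof. by move/(order_path_min le_trans_A)/allP. Qed.

Lemma chainP_tail E c s : cmp E -> chainP E (c :: s) -> chainP E s.
Proof.
move=> hE [hs hu hp hc]; split.
- exact: path_sorted hs.
- by case/andP: hu.
- exact: subset_trans (pairs_cons c s) hp.
move=> x y xs xy.
have : y \in c :: s by apply: hc xy; rewrite in_cons xs orbT.
rewrite in_cons => /orP [/eqP yc|//].
have h1 := hE _ _ xy.
have h2 := path_minA hs xs.
by move: h1; rewrite yc => /(le_lt_trans h2); rewrite ltxx.
Qed.

Lemma size_uniq_le (s : seq 'I_n) : uniq s -> (size s <= n)%N.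
Proof.
by move/card_uniqP <-; rewrite -[X in (_ <= X)%N]card_ord; apply: max_card.
Qed.


Definition vstepf (E : arcs n) f u := fun (st' : vstate n) (w : 'I_n) =>
  if w \in st'.1 then st' else visit A E f w (st'.1, (u, w) |: st'.2).

Lemma visitS E f u st :
  visit A E f.+1 u st = foldl (vstepf E f u) (u |: st.1, st.2) (outs A E u).
Proof. by []. Qed.

Lemma foldl_skip E f u (t : seq 'I_n) (st : vstate n) :
  (forall w, w \in t -> w \in st.1) -> foldl (vstepf E f u) st t = st.
Proof.
elim: t => [|w t IH] //= h.
by rewrite /vstepf h ?mem_head // IH // => y yt; apply: h; rewrite in_cons yt orbT.
Qed.

Lemma outs_chain E c c1 s : cmp E -> chainP E [:: c, c1 & s] ->
  exists t, outs A E c = c1 :: t /\ (forall y, y \in t -> y \in c1 :: s).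
Proof.
move=> hE [hs hu hp hc].
have memo y : (y \in [seq w <- enum 'I_n | (c, w) \in E]) = ((c, y) \in E).
  by rewrite mem_filter mem_enum andbT.
have outin y : (c, y) \in E -> y \in c1 :: s.
  move=> cy; have := hc c y (mem_head _ _) cy.
  rewrite in_cons => /orP [/eqP yc|//].
  by move: (hE _ _ cy); rewrite yc ltxx.
have [t ht] : exists t, outs A E c = c1 :: t.
  apply: sortA_head.
    by rewrite memo; apply: (subsetP hp); rewrite pairs_cons2 setU11.
  move=> y; rewrite memo => /outin; rewrite in_cons => /orP [/eqP -> //|ys].
  by apply: path_minA ys; case/andP: hs => _.
exists t; split => // y yt.
have : y \in outs A E c by rewrite ht in_cons yt orbT.
by rewrite /outs mem_sort memo => /outin.
Qed.

Lemma visit_chain E : cmp E -> forall s c f (V : {set 'I_n}) (F : arcs n),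
  chainP E (c :: s) -> (forall x, x \in c :: s -> x \notin V) -> (size s < f)%N ->
  visit A E f c ((V, F) : vstate n) = (V :|: [set x in c :: s], F :|: pairs (c :: s)).
Proof.
move=> hE; elim=> [|c1 s IH] c [|f] V F hch hV hf //.
  rewrite visitS /=.
  have -> : outs A E c = [::].
    rewrite /outs; apply: sortA_nil => y; rewrite mem_filter mem_enum andbT.
    apply/negP => cy; case: hch => _ _ _ /(_ c y (mem_head _ _) cy).
    by rewrite inE => /eqP yc; move: (hE _ _ cy); rewrite yc ltxx.
  congr (_, _); last by rewrite setU0.
  by apply/setP => x; rewrite !inE orbC.
have [t [ht htm]] := outs_chain hE hch.
rewrite visitS ht.
change (foldl (vstepf E f c) (vstepf E f c (c |: V, F) c1) t = (V :|: [set x in [:: c, c1 & s]], F :|: pairs [:: c, c1 & s])).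
have cV : c1 \notin c |: V.
  rewrite in_setU1 negb_or (hV c1); last by rewrite in_cons mem_head orbT.
  rewrite andbT; case: hch => _ /andP [] ; rewrite in_cons negb_or => /andP [].
  by rewrite eq_sym => ? _ _ _ _.
have hch' := chainP_tail hE hch.
have hV' : forall x, x \in c1 :: s -> x \notin c |: V.
  move=> x xs; rewrite in_setU1 negb_or hV ?andbT; last by rewrite in_cons xs orbT.
  by case: hch => _ /andP [cn _] _ _; apply/negP => /eqP xc; rewrite -xc xs in cn.
rewrite {2}/vstepf /= (negbTE cV) (IH c1 f _ _ hch' hV' hf).
rewrite foldl_skip /=; last first.
  by move=> w /htm wt; rewrite in_setU inE wt orbT.
congr (_, _).
  by apply/setP => x; rewrite !inE [(x == c) || _]orbC !orbA.
by rewrite -/(pairs (c1 :: s)) -setUA setUCA.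
Qed.


Definition Inv (E : arcs n) (cs : seq (seq 'I_n)) :=
  [/\ cmp E, forall c, c \in cs -> chainP E c /\ c != [::], uniq (flatten cs) &
      forall x y, (x, y) \in E -> x \in flatten cs].

Lemma mem_flat (cs : seq (seq 'I_n)) c x : c \in cs -> x \in c -> x \in flatten cs.
Proof. by move=> cc xc; apply/flattenP; exists c. Qed.

Lemma disj (cs : seq (seq 'I_n)) c c' x : uniq (flatten cs) -> c \in cs -> c' \in cs ->
  x \in c -> x \in c' -> c = c'.
Proof.
elim: cs => [|d cs IH] //=; rewrite cat_uniq => /and3P [ud dis ucs].
have nd y e : e \in cs -> y \in d -> y \in e -> False.
  move=> ecs yd ye; move/hasP: dis; apply; exists y; first exact: mem_flat ecs ye.
  by [].
rewrite !in_cons => /orP[/eqP->|cin] /orP[/eqP->|c'in] xc xc' //.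
- by case: (nd x c').
- by case: (nd x c).
- exact: IH.
Qed.

Lemma mem_bigcup_seq (I : Type) (cs : seq I) (G : I -> {set 'I_n * 'I_n}) e :
  (e \in \bigcup_(c <- cs) G c) = has (fun c => e \in G c) cs.
Proof.
elim: cs => [|c cs IH]; first by rewrite big_nil inE.
by rewrite big_cons in_setU IH.
Qed.

Definition dstep (E : arcs n) := fun (acc : vstate n * seq 'I_n) (l : 'I_n) =>
  if l \in acc.1.1 then acc else (visit A E n l acc.1, rcons acc.2 l).

Lemma dfsE E L : dfs_forest A E L =
  ((foldl (dstep E) ((set0, set0), [::]) L).1.2, (foldl (dstep E) ((set0, set0), [::]) L).2).
Proof. by []. Qed.

Lemma dfs_fold E (cs : seq (seq 'I_n)) : cmp E ->
  (forall c, c \in cs -> chainP E c /\ c != [::]) -> uniq (flatten cs) ->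
  forall (V : {set 'I_n}) (F : arcs n) rs, (forall x, x \in flatten cs -> x \notin V) ->
  foldl (dstep E) ((V, F), rs) (map (head x0) cs) =
  ((V :|: [set x in flatten cs], F :|: \bigcup_(c <- cs) pairs c), rs ++ map (head x0) cs).
Proof.
move=> hE; elim: cs => [|c cs IH] hch hu V F rs hV /=.
  by rewrite big_nil !setU0 cats0.
have [hc cn] := hch c (mem_head _ _).
have hch' : forall c', c' \in cs -> chainP E c' /\ c' != [::].
  by move=> c' cc; apply: hch; rewrite in_cons cc orbT.
clear hch; case: c hc cn hu hV => [|h t] // hc _ hu hV.
have : uniq ((h :: t) ++ flatten cs) by [].
rewrite cat_uniq => /and3P [uc dis ucs].
have hVh : h \notin V by apply: hV; rewrite /= mem_head.
rewrite {2}/dstep /= (negbTE hVh) (@visit_chain E hE t h n V F hc) /=; last first.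
- by have := size_uniq_le uc.
- by move=> x xc; apply: hV; rewrite -[flatten ((h :: t) :: cs)]/((h :: t) ++ flatten cs) mem_cat xc.
rewrite IH //; last first.
- move=> x xf; rewrite in_setU negb_or hV ?xf ?orbT //=; last first.
    by rewrite -cat_cons mem_cat xf orbT.
  rewrite inE.
  by apply/negP => xc; move/hasP: dis; apply; exists x.
rewrite cat_rcons big_cons; congr (_, _); congr (_, _).
  by apply/setP => x; rewrite !inE mem_cat !orbA.
by rewrite -/(pairs (h :: t)) setUA.
Qed.

Lemma dfs_chains E cs : Inv E cs ->
  dfs_forest A E (map (head x0) cs) = (\bigcup_(c <- cs) pairs c, map (head x0) cs).
Proof.
case=> hE hch hu _; rewrite dfsE dfs_fold //=; last by move=> x _; rewrite inE.
by congr (_, _); apply/setP => e; rewrite !inE.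
Qed.

Lemma usym_sym (E : arcs n) : symmetric (usym E).
Proof. by move=> x y; rewrite /usym orbC. Qed.

Lemma conn_head (E : {set 'I_n * 'I_n}) (h : 'I_n) t y : pairs (h :: t) \subset E -> y \in h :: t ->
  connect (usym E) h y.
Proof.
elim: t h => [|h1 t IH] h hp; first by rewrite inE => /eqP ->.
rewrite in_cons => /orP [/eqP -> //|yt].
apply: connect_trans (IH h1 _ yt); last first.
  by apply: subset_trans hp; apply: pairs_cons.
apply: connect1; rewrite /usym (subsetP hp) //.
by rewrite pairs_cons2 setU11.
Qed.

Lemma conn_chain (E : {set 'I_n * 'I_n}) cs c x y : Inv E cs -> c \in cs -> x \in c ->
  connect (usym E) x y = (y \in c).
Proof.
move=> [hE hch hu hsrc] cc xc; apply/idP/idP.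
  move=> cxy; rewrite -(closed_connect _ cxy) //.
  apply: intro_closed; first exact: sym_connect_sym (@usym_sym E).
  have step a b : (a, b) \in E -> (a \in c) = (b \in c).
    move=> ab; apply/idP/idP => [ac|bc].
      by case: (hch c cc) => [[_ _ _ cl] _]; apply: cl ab.
    have /flattenP [c' c'c ac'] := hsrc _ _ ab.
    have bc' : b \in c' by case: (hch c' c'c) => [[_ _ _ cl] _]; apply: cl ab.
    by rewrite (disj hu cc c'c bc bc').
  move=> a b; rewrite /usym => /orP [ab|ba].
    by rewrite (step _ _ ab).
  by rewrite (step _ _ ba).
move=> yc.
have [[_ _ hp _] cn] := hch c cc.
case: c cc xc yc hp cn => [|h t] // cc xc yc hp _.
apply: connect_trans (conn_head hp yc).
rewrite (sym_connect_sym (@usym_sym E) x h); exact: conn_head hp xc.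
Qed.


Lemma Inv_forest (E : {set 'I_n * 'I_n}) cs : Inv E cs -> Inv (\bigcup_(c <- cs) pairs c) cs.
Proof.
move=> [hE hch hu hsrc].
have memP e : reflect (exists2 c, c \in cs & e \in pairs c) (e \in \bigcup_(c <- cs) pairs c).
  by rewrite mem_bigcup_seq; apply: hasP.
split => //.
- move=> x y /memP [c cc xy]; apply: hE.
  by case: (hch c cc) => [[_ _ hp _] _]; apply: (subsetP hp).
- move=> c cc; have [[h1 h2 h3 h4] h5] := hch c cc; split => //; split => //.
    by apply/subsetP => e ec; apply/memP; exists c.
  move=> x y xc /memP [c' c'c xy]; case/andP: (mem_pairs xy) => xc' yc'.
  by rewrite (disj hu cc c'c xc xc').
- move=> x y /memP [c cc xy]; case/andP: (mem_pairs xy) => xc _.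
  exact: mem_flat cc xc.
Qed.

Lemma dipaths cs : Inv (\bigcup_(c <- cs) pairs c) cs ->
  all_components_dipaths (\bigcup_(c <- cs) pairs c).
Proof.
move=> I v; have I' := I; case: I' => [hE hch hu hsrc].
set P := \bigcup_(c <- cs) pairs c.
have memP e : reflect (exists2 c, c \in cs & e \in pairs c) (e \in P).
  by rewrite mem_bigcup_seq; apply: hasP.
case: (boolP (v \in flatten cs)) => [/flattenP [c cc vc]|vnf].
  exists c; split.
  - by case: (hch c cc) => [[]].
  - by move=> x; rewrite (conn_chain x I cc vc).
  move=> x y xc; rewrite -(pairs_nth v); split.
    case/memP => c' c'c xy; case/andP: (mem_pairs xy) => xc' _.
    by rewrite (disj hu cc c'c xc xc').
  by move=> xy; apply/memP; exists c.
have nov y : ~~ usym P v y.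
  apply/negP; rewrite /usym => /orP [] /memP [c cc] /mem_pairs /andP [h1 h2].
    by move: vnf; rewrite (mem_flat cc h1).
  by move: vnf; rewrite (mem_flat cc h2).
exists [:: v]; split => //.
- move=> x; rewrite inE; apply/idP/idP => [/eqP -> //|/connectP [p hp ->]].
  by case: p hp => [|y p] //= /andP [hy _]; move: (nov y); rewrite hy.
move=> x y; rewrite inE => /eqP ->; split.
  by move=> vy; move: (nov y); rewrite /usym vy.
by case=> i [].
Qed.

Lemma merge_cons2 x y s t : merge le (x :: s) (y :: t) =
  if le x y then x :: merge le s (y :: t) else y :: merge le (x :: s) t.
Proof. by []. Qed.

Section Mchain.
Variables np nq : 'I_n -> option 'I_n.

Lemma mchain_mono f p q (acc : {set 'I_n * 'I_n}) : acc \subset mchain A np nq f p q acc.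
Proof.
elim: f p q acc => [|f IH] p q acc /=; first exact: subxx.
case: ifP => _.
  case: (np p) => [p'|]; last exact: subsetUr.
  by apply: subset_trans (IH p' q _); exact: subsetUr.
case: (nq q) => [q'|]; last exact: subsetUr.
by apply: subset_trans (IH p q' _); exact: subsetUr.
Qed.

Definition Hnext (np : 'I_n -> option 'I_n) (s : seq 'I_n) :=
  forall pre x t, s = pre ++ x :: t -> np x = ohead t.

Lemma Hnext_tail np' p s : Hnext np' (p :: s) -> Hnext np' s.
Proof. by move=> H pre x t e; apply: (H (p :: pre)); rewrite e. Qed.

Lemma lt_of_not (p q : 'I_n) : p != q -> (A p < A q) = false -> A q < A p.
Proof.
move=> npq /negbT; rewrite -leNgt le_eqVlt => /orP [/eqP e|//].
by move: npq; rewrite (injA e) eqxx.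
Qed.

Lemma mchain_arcs f p s1 q s2 (acc : {set 'I_n * 'I_n}) e :
  Hnext np (p :: s1) -> Hnext nq (q :: s2) ->
  (forall x y, x \in p :: s1 -> y \in q :: s2 -> x != y) ->
  e \in mchain A np nq f p q acc ->
  e \in acc \/ [/\ A e.1 < A e.2, e.1 \in (p :: s1) ++ (q :: s2) & e.2 \in (p :: s1) ++ (q :: s2)].
Proof.
elim: f p s1 q s2 acc => [|f IH] p s1 q s2 acc H1 H2 Hd /=; first by left.
have Lp : p \in (p :: s1) ++ (q :: s2) by rewrite mem_head.
have Lq : q \in (p :: s1) ++ (q :: s2) by rewrite mem_cat mem_head orbT.
case: ifP => hpq.
  have ins : (p, q) |: acc \subset acc :|: [set e | (A e.1 < A e.2) && (e.1 \in (p :: s1) ++ (q :: s2)) && (e.2 \in (p :: s1) ++ (q :: s2))].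
    by rewrite subUset sub1set in_setU in_set /= hpq Lp Lq orbT subsetUl.
  have fin e' : e' \in (p, q) |: acc -> e' \in acc \/ [/\ A e'.1 < A e'.2, e'.1 \in (p :: s1) ++ (q :: s2) & e'.2 \in (p :: s1) ++ (q :: s2)].
    move/(subsetP ins); rewrite !inE => /orP [->|/andP [/andP [h1 h2] h3]]; first by left.
    by right.
  case: s1 H1 Hd ins fin Lp Lq => [|p' s1] H1 Hd ins fin Lp Lq.
    by rewrite (H1 [::] p [::]) //; apply: fin.
  rewrite (H1 [::] p (p' :: s1)) //.
  move=> he.
  have Hd' : forall x y, x \in p' :: s1 -> y \in q :: s2 -> x != y.
    by move=> x y xs ys; apply: Hd => //; rewrite in_cons xs orbT.
  case: (IH p' s1 q s2 _ (Hnext_tail H1) H2 Hd' he); first exact: fin.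
  case=> h1 h2 h3; right; split => //.
    by move: h2; rewrite /= !in_cons => /orP [->|->]; rewrite ?orbT.
  by move: h3; rewrite /= !in_cons => /orP [->|->]; rewrite ?orbT.
have hqp : A q < A p by apply: lt_of_not hpq; apply: Hd; rewrite mem_head.
have ins : (q, p) |: acc \subset acc :|: [set e | (A e.1 < A e.2) && (e.1 \in (p :: s1) ++ (q :: s2)) && (e.2 \in (p :: s1) ++ (q :: s2))].
  by rewrite subUset sub1set in_setU in_set /= hqp Lq Lp orbT subsetUl.
have fin e' : e' \in (q, p) |: acc -> e' \in acc \/ [/\ A e'.1 < A e'.2, e'.1 \in (p :: s1) ++ (q :: s2) & e'.2 \in (p :: s1) ++ (q :: s2)].
  move/(subsetP ins); rewrite !inE => /orP [->|/andP [/andP [h1 h2] h3]]; first by left.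
  by right.
case: s2 H2 Hd ins fin Lp Lq => [|q' s2] H2 Hd ins fin Lp Lq.
  by rewrite (H2 [::] q [::]) //; apply: fin.
rewrite (H2 [::] q (q' :: s2)) //.
move=> he.
have Hd' : forall x y, x \in p :: s1 -> y \in q' :: s2 -> x != y.
  by move=> x y xs ys; apply: Hd => //; rewrite in_cons ys orbT.
case: (IH p s1 q' s2 _ H1 (Hnext_tail H2) Hd' he); first exact: fin.
have sub z : z \in (p :: s1) ++ (q' :: s2) -> z \in (p :: s1) ++ (q :: q' :: s2).
  by rewrite !mem_cat !in_cons; case: (z == p); case: (z \in s1); case: (z == q'); case: (z == q); case: (z \in s2).
by case=> h1 h2 h3; right; split => //; apply: sub.
Qed.


Lemma merge_lt (p q : 'I_n) s1 s2 : A p < A q ->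
  merge le (p :: s1) (q :: s2) = p :: merge le s1 (q :: s2).
Proof. by move=> h; rewrite merge_cons2 /leA (ltW h). Qed.

Lemma merge_gt (p q : 'I_n) s1 s2 : A q < A p ->
  merge le (p :: s1) (q :: s2) = q :: merge le (p :: s1) s2.
Proof. by move=> h; rewrite merge_cons2 /leA (lt_geF h). Qed.

Lemma mchain_lt f p q (acc : {set 'I_n * 'I_n}) : A p < A q ->
  mchain A np nq f.+1 p q acc =
  match np p with Some p' => mchain A np nq f p' q ((p, q) |: acc) | None => (p, q) |: acc end.
Proof. by move=> h; rewrite /= h. Qed.

Lemma mchain_gt f p q (acc : {set 'I_n * 'I_n}) : A q < A p ->
  mchain A np nq f.+1 p q acc =
  match nq q with Some q' => mchain A np nq f p q' ((q, p) |: acc) | None => (q, p) |: acc end.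
Proof. by move=> h; rewrite /= (lt_gtF h). Qed.

Lemma mchain_lt_none f p q (acc : {set 'I_n * 'I_n}) : A p < A q -> np p = None ->
  mchain A np nq f.+1 p q acc = (p, q) |: acc.
Proof. by move=> h h'; rewrite mchain_lt // h'. Qed.
Lemma mchain_lt_some f p p' q (acc : {set 'I_n * 'I_n}) : A p < A q -> np p = Some p' ->
  mchain A np nq f.+1 p q acc = mchain A np nq f p' q ((p, q) |: acc).
Proof. by move=> h h'; rewrite mchain_lt // h'. Qed.
Lemma mchain_gt_none f p q (acc : {set 'I_n * 'I_n}) : A q < A p -> nq q = None ->
  mchain A np nq f.+1 p q acc = (q, p) |: acc.
Proof. by move=> h h'; rewrite mchain_gt // h'. Qed.
Lemma mchain_gt_some f p q q' (acc : {set 'I_n * 'I_n}) : A q < A p -> nq q = Some q' ->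
  mchain A np nq f.+1 p q acc = mchain A np nq f p q' ((q, p) |: acc).
Proof. by move=> h h'; rewrite mchain_gt // h'. Qed.

Lemma sub_ins (a : 'I_n * 'I_n) (S Z : {set 'I_n * 'I_n}) : a \in Z -> S \subset Z -> (a |: S) \subset Z.
Proof. by move=> aZ SZ; rewrite subUset sub1set aZ. Qed.

Lemma mchain_pairs f p s1 q s2 (acc : {set 'I_n * 'I_n}) :
  Hnext np (p :: s1) -> Hnext nq (q :: s2) ->
  (forall x y, x \in p :: s1 -> y \in q :: s2 -> x != y) ->
  (size s1 + size s2 < f)%N ->
  pairs (merge le (p :: s1) (q :: s2)) \subset
    pairs (p :: s1) :|: pairs (q :: s2) :|: mchain A np nq f p q acc.
Proof.
elim: f p s1 q s2 acc => [|f IH] // p s1 q s2 acc H1 H2 Hd hf.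
have npq : p != q by apply: Hd; rewrite mem_head.
case: (ltP (A p) (A q)) => [hpq|hqp].
  rewrite merge_lt //.
  case: s1 H1 Hd hf => [|p' s1] H1 Hd hf.
    rewrite (mchain_lt_none _ _ hpq (H1 [::] p [::] erefl)) pairs_cons2; apply: sub_ins.
      by rewrite in_setU setU11 orbT.
    by apply/subsetP => e he; rewrite !in_setU he orbT.
  rewrite (mchain_lt_some _ _ hpq (H1 [::] p (p' :: s1) erefl)).
  have Hd' : forall x y, x \in p' :: s1 -> y \in q :: s2 -> x != y.
    by move=> x y xs ys; apply: Hd => //; rewrite in_cons xs orbT.
  have IH' := IH p' s1 q s2 ((p, q) |: acc) (Hnext_tail H1) H2 Hd' hf.
  have mono := mchain_mono f p' q ((p, q) |: acc).
  have sub : pairs (p' :: s1) :|: pairs (q :: s2) :|: mchain A np nq f p' q ((p, q) |: acc)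
     \subset pairs [:: p, p' & s1] :|: pairs (q :: s2) :|: mchain A np nq f p' q ((p, q) |: acc).
    by apply: setSU; apply: setSU; apply: pairs_cons.
  case: (ltP (A p') (A q)) IH' => [h'|h'] IH'.
    rewrite merge_lt // in IH' *; rewrite pairs_cons2; apply: sub_ins.
      by rewrite in_setU in_setU pairs_cons2 setU11.
    exact: subset_trans IH' sub.
  have h'' : A q < A p'.
    rewrite lt_neqAle h' andbT; apply/negP => /eqP /injA e.
    by have := Hd p' q; rewrite e eqxx => h; suff: ~~ true by []; apply: h; rewrite !in_cons eqxx ?orbT.
  rewrite merge_gt // in IH' *; rewrite pairs_cons2; apply: sub_ins.
    by rewrite in_setU (subsetP mono) ?setU11 ?orbT.
  exact: subset_trans IH' sub.
have hqp' : A q < A p.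
  rewrite lt_neqAle hqp andbT; apply/negP => /eqP /injA e.
  by move: npq; rewrite e eqxx.
rewrite merge_gt //.
case: s2 H2 Hd hf => [|q' s2] H2 Hd hf.
  rewrite (mchain_gt_none _ _ hqp' (H2 [::] q [::] erefl)).
  rewrite -[merge le (p :: s1) [::]]/(p :: s1) pairs_cons2; apply: sub_ins.
    by rewrite in_setU setU11 orbT.
  by apply/subsetP => e he; rewrite !in_setU he.
rewrite (mchain_gt_some _ _ hqp' (H2 [::] q (q' :: s2) erefl)).
have Hd' : forall x y, x \in p :: s1 -> y \in q' :: s2 -> x != y.
  by move=> x y xs ys; apply: Hd => //; rewrite in_cons ys orbT.
have hf' : (size s1 + size s2 < f)%N by move: hf; rewrite /= addnS.
have IH' := IH p s1 q' s2 ((q, p) |: acc) H1 (Hnext_tail H2) Hd' hf'.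
have mono := mchain_mono f p q' ((q, p) |: acc).
have sub : pairs (p :: s1) :|: pairs (q' :: s2) :|: mchain A np nq f p q' ((q, p) |: acc)
   \subset pairs (p :: s1) :|: pairs [:: q, q' & s2] :|: mchain A np nq f p q' ((q, p) |: acc).
  by apply: setSU; apply: setUS; apply: pairs_cons.
case: (ltP (A p) (A q')) IH' => [h'|h'] IH'.
  rewrite merge_lt // in IH' *; rewrite pairs_cons2; apply: sub_ins.
    by rewrite in_setU (subsetP mono) ?setU11 ?orbT.
  exact: subset_trans IH' sub.
have h'' : A q' < A p.
  rewrite lt_neqAle h' andbT; apply/negP => /eqP /injA e.
  by have := Hd p q'; rewrite e eqxx => h; suff: ~~ true by []; apply: h; rewrite !in_cons eqxx ?orbT.
rewrite merge_gt // in IH' *; rewrite pairs_cons2; apply: sub_ins.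
  by rewrite in_setU in_setU pairs_cons2 setU11 orbT.
exact: subset_trans IH' sub.
Qed.

End Mchain.


Lemma sorted_pre pre (x : 'I_n) t : sorted le (pre ++ x :: t) -> forall w, w \in pre -> A w <= A x.
Proof.
elim: pre => [|h pre IH] //= hs w; rewrite in_cons => /orP [/eqP ->|wp].
  have /allP := order_path_min le_trans_A hs; apply.
  by rewrite mem_cat mem_head orbT.
exact: IH (path_sorted hs) w wp.
Qed.

Lemma sorted_suf pre (s : seq 'I_n) : sorted le (pre ++ s) -> sorted le s.
Proof. by elim: pre => //= h pre IH hs; apply: IH; exact: path_sorted hs. Qed.

Lemma memC (E : {set 'I_n * 'I_n}) cs c r y : Inv E cs -> c \in cs -> r \in c ->
  (y \in compnt E r) = (y \in c).
Proof.
by move=> I cc rc; rewrite /compnt mem_filter mem_enum andbT (conn_chain y I cc rc).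
Qed.

Lemma nextin_chain (E : {set 'I_n * 'I_n}) cs c pre x t r : Inv E cs -> c \in cs -> r \in c ->
  c = pre ++ x :: t -> nextin A E (compnt E r) x = ohead t.
Proof.
move=> I cc rc ec; have I' := I; case: I' => hE hch hu hsrc.
have [[hs hun hp hcl] _] := hch c cc.
have memL y : (y \in [seq w <- outs A E x | w \in compnt E r]) = ((x, y) \in E) && (y \in c).
  by rewrite mem_filter (memC y I cc rc) /outs mem_sort mem_filter mem_enum andbT andbC.
have xc : x \in c by rewrite ec mem_cat mem_head orbT.
have hs' : sorted le (pre ++ x :: t) by rewrite -ec.
have bad y : (x, y) \in E -> y \in c -> y \in t.
  move=> xy yc; have lt := hE _ _ xy.
  move: yc; rewrite ec mem_cat in_cons => /orP [yp|/orP [/eqP yx|//]].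
    by have := sorted_pre hs' yp; rewrite leNgt lt.
  by rewrite yx ltxx in lt.
rewrite /nextin; case: t ec hs' bad => [|q t'] ec hs' bad.
  rewrite sortA_nil // => y; rewrite memL; apply/negP => /andP [xy yc].
  by have := bad y xy yc.
have [t2 ->] : exists t2, sortA A [seq w <- outs A E x | w \in compnt E r] = q :: t2.
  apply: sortA_head.
    rewrite memL; apply/andP; split; last by rewrite ec mem_cat !in_cons eqxx !orbT.
    apply: (subsetP hp); rewrite ec; apply: (subsetP (pairs_cat pre _)).
    by rewrite pairs_cons2 setU11.
  move=> y; rewrite memL => /andP [xy yc]; have := bad y xy yc.
  rewrite in_cons => /orP [/eqP -> //|yt].
  have : sorted le (q :: t') by apply: (@sorted_suf (rcons pre x)); rewrite cat_rcons.
  by move/path_minA; apply.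
by [].
Qed.

Lemma cmin_chain (E : {set 'I_n * 'I_n}) cs r t : Inv E cs -> r :: t \in cs -> cmin A E r = r.
Proof.
move=> I cc; have I' := I; case: I' => hE hch hu hsrc.
have [[hs hun hp hcl] _] := hch _ cc.
rewrite /cmin; have [t2 ->] // : exists t2, sortA A (compnt E r) = r :: t2.
apply: sortA_head; first by rewrite (memC r I cc (mem_head _ _)) mem_head.
move=> y; rewrite (memC y I cc (mem_head _ _)) in_cons => /orP [/eqP -> //|yt].
exact: path_minA hs _ yt.
Qed.

Lemma comp_merge_spec (E : {set 'I_n * 'I_n}) cs r1 t1 r2 t2 : Inv E cs ->
  r1 :: t1 \in cs -> r2 :: t2 \in cs -> uniq ((r1 :: t1) ++ (r2 :: t2)) ->
  pairs (merge le (r1 :: t1) (r2 :: t2)) \subset E :|: comp_merge A E r1 r2 /\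
  (forall e, e \in comp_merge A E r1 r2 ->
    [/\ A e.1 < A e.2, e.1 \in (r1 :: t1) ++ (r2 :: t2) & e.2 \in (r1 :: t1) ++ (r2 :: t2)]).
Proof.
move=> I c1 c2 hu; have I' := I; case: I' => hE hch hU hsrc.
have [[_ _ hp1 _] _] := hch _ c1.
have [[_ _ hp2 _] _] := hch _ c2.
rewrite /comp_merge /= (cmin_chain I c1) (cmin_chain I c2).
have H1 : Hnext (nextin A E (compnt E r1)) (r1 :: t1).
  by move=> pre x t e; apply: (nextin_chain I c1 (mem_head _ _) e).
have H2 : Hnext (nextin A E (compnt E r2)) (r2 :: t2).
  by move=> pre x t e; apply: (nextin_chain I c2 (mem_head _ _) e).
have Hd : forall x y, x \in r1 :: t1 -> y \in r2 :: t2 -> x != y.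
  move=> x y xs ys; apply/eqP => exy; move: hu; rewrite cat_uniq => /and3P [_ /hasP nh _].
  by apply: nh; exists y => //; rewrite -exy.
have hf : (size t1 + size t2 < n)%N.
  by have := size_uniq_le hu; rewrite size_cat /= addSn addnS => /ltnW.
split.
  apply: subset_trans (mchain_pairs set0 H1 H2 Hd hf) _.
  by apply: setSU; rewrite subUset hp1 hp2.
move=> e /(mchain_arcs H1 H2 Hd) [|//]; by rewrite inE.
Qed.


Lemma pm_ind (P : seq (seq 'I_n) -> Prop) : P [::] -> (forall c, P [:: c]) ->
  (forall c1 c2 rest, P rest -> P [:: c1, c2 & rest]) -> forall cs, P cs.
Proof.
move=> h0 h1 h2 cs; suff: P cs /\ forall c, P (c :: cs) by case.
elim: cs => [|c cs [IH1 IH2]]; split => //.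
by move=> c'; apply: h2 IH1.
Qed.

Fixpoint pm (cs : seq (seq 'I_n)) : seq (seq 'I_n) :=
  match cs with
  | c1 :: c2 :: rest => merge le c1 c2 :: pm rest
  | _ => cs
  end.

Lemma pm_perm cs : perm_eq (flatten (pm cs)) (flatten cs).
Proof.
elim/pm_ind: cs => // c1 c2 rest IH /=.
rewrite catA; apply: perm_cat => //.
by rewrite perm_merge perm_refl.
Qed.

Lemma pm_mem cs c : c \in pm cs ->
  c \in cs \/ exists c1 c2, [/\ c1 \in cs, c2 \in cs & c = merge le c1 c2].
Proof.
elim/pm_ind: cs c => [|c0|c1 c2 rest IH] c; [by [] | by left|].
rewrite /= in_cons => /orP [/eqP ->|/IH [h|[d1 [d2 [h1 h2 h3]]]]].
- by right; exists c1, c2; rewrite !in_cons !eqxx ?orbT.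
- by left; rewrite !in_cons h !orbT.
by right; exists d1, d2; rewrite !in_cons h1 h2 !orbT.
Qed.

Lemma pm_cover cs c : c \in cs -> exists2 c', c' \in pm cs & {subset c <= c'}.
Proof.
elim/pm_ind: cs c => [|c|c1 c2 rest IH] c' //.
  by rewrite inE => /eqP ->; exists c => //; rewrite mem_head.
rewrite !in_cons => /orP [/eqP ->|/orP [/eqP ->|h]].
- by exists (merge le c1 c2); rewrite ?mem_head // => x xc; rewrite mem_merge mem_cat xc.
- by exists (merge le c1 c2); rewrite ?mem_head // => x xc; rewrite mem_merge mem_cat xc orbT.
have [d dp sub] := IH c' h; exists d => //; by rewrite in_cons dp orbT.
Qed.

Lemma mstep_cons2 (E : {set 'I_n * 'I_n}) r1 r2 rs : mstep A E [:: r1, r2 & rs] =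
  (comp_merge A E r1 r2 :|: (mstep A E rs).1, (if A r1 < A r2 then r1 else r2) :: (mstep A E rs).2).
Proof. by []. Qed.

Lemma uniq_flat_chain (cs : seq (seq 'I_n)) c : uniq (flatten cs) -> c \in cs -> uniq c.
Proof.
elim: cs => [|d cs IH] //=; rewrite cat_uniq => /and3P [ud _ uc].
by rewrite in_cons => /orP [/eqP ->|/IH]; [|apply].
Qed.

Lemma mstep_spec (E : {set 'I_n * 'I_n}) cs0 : Inv E cs0 -> forall cs,
  {subset cs <= cs0} -> uniq (flatten cs) ->
  [/\ (mstep A E (map (head x0) cs)).2 = map (head x0) (pm cs),
      (forall c, c \in pm cs -> pairs c \subset E :|: (mstep A E (map (head x0) cs)).1) &
      (forall e, e \in (mstep A E (map (head x0) cs)).1 ->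
         A e.1 < A e.2 /\ exists2 c, c \in pm cs & (e.1 \in c) && (e.2 \in c))].
Proof.
move=> I; have I' := I; case: I' => hE hch hU hsrc.
elim/pm_ind.
- by move=> _ _; split => // e; rewrite inE.
- move=> c sub _; split => //.
    move=> c'; rewrite inE => /eqP ->; have [[_ _ hp _] _] := hch c (sub c (mem_head _ _)).
    by rewrite /= setU0.
  by move=> e; rewrite inE.
move=> c1 c2 rest IH sub hu.
have s1 : c1 \in cs0 by apply: sub; rewrite mem_head.
have s2 : c2 \in cs0 by apply: sub; rewrite !in_cons eqxx orbT.
have [_ n1] := hch _ s1; have [_ n2] := hch _ s2.
have subr : {subset rest <= cs0} by move=> c cr; apply: sub; rewrite !in_cons cr !orbT.
move: hu; rewrite /= !cat_uniq => /and3P [u1 /hasP h1 /and3P [u2 /hasP h2 ur]].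
have u12 : uniq (c1 ++ c2).
  rewrite cat_uniq u1 u2 andbT; apply/hasP => [[x xc2 xc1]]; apply: h1.
  by exists x => //; rewrite mem_cat xc2.
have [IH1 IH2 IH3] := IH subr ur.
clear sub h1 h2 u1 u2.
case: c1 n1 s1 u12 => [|r1 t1] // _ s1 u12.
case: c2 n2 s2 u12 => [|r2 t2] // _ s2 u12.
have [CM1 CM2] := comp_merge_spec I s1 s2 u12.
rewrite /=; split.
- rewrite IH1; congr (_ :: _).
  have r12 : r1 != r2.
    apply/eqP => e; move: u12; rewrite cat_uniq => /and3P [_ /hasP nh _]; apply: nh.
    by exists r2; rewrite ?mem_head // -e mem_head.
  by rewrite (leA_lt r12); case: ifP.
- move=> c; rewrite in_cons => /orP [/eqP ->|cr].
    apply: subset_trans CM1 _; apply: setUS; exact: subsetUl.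
  apply: subset_trans (IH2 c cr) _; apply: setUS; exact: subsetUr.
move=> e; rewrite in_setU => /orP [/CM2 [h1' h2' h3']|/IH3 [h1' [c cr hc]]].
  split => //; exists (merge le (r1 :: t1) (r2 :: t2)); first by rewrite mem_head.
  by rewrite !mem_merge h2' h3'.
by split => //; exists c => //; rewrite in_cons cr orbT.
Qed.

Lemma merge_step_Inv (E : {set 'I_n * 'I_n}) cs : Inv E cs ->
  (merge_step A E (map (head x0) cs)).2 = map (head x0) (pm cs) /\
  Inv (merge_step A E (map (head x0) cs)).1 (pm cs).
Proof.
move=> I; have I' := I; case: I' => hE hch hU hsrc.
have [S1 S2 S3] := mstep_spec I (fun c h => h) hU.
rewrite /merge_step /=; split => //.
set X := (mstep A E [seq head x0 i | i <- cs]).1 in S2 S3 *.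
have hUp : uniq (flatten (pm cs)) by rewrite (perm_uniq (pm_perm cs)).
have memf x : (x \in flatten (pm cs)) = (x \in flatten cs) by apply: perm_mem; exact: pm_perm.
split => //.
- move=> x y; rewrite in_setU => /orP [/hE //|/S3 [] //].
- move=> c cp; split; last first.
    case: (pm_mem cp) => [/hch [] //|[c1 [c2 [h1 h2 ->]]]].
    have [_ n1] := hch _ h1; have [_ n2] := hch _ h2.
    by case: c1 n1 {h1} => [|a c1] // _; case: c2 n2 {h2} => [|b c2] // _; rewrite merge_cons2; case: ifP.
  split.
  + case: (pm_mem cp) => [/hch [[]] //|[c1 [c2 [h1 h2 ->]]]].
    have [[hs1 _ _ _] _] := hch _ h1; have [[hs2 _ _ _] _] := hch _ h2.
    by apply: merge_sorted => //; exact: le_total_A.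
  + exact: uniq_flat_chain hUp cp.
  + exact: S2.
  move=> x y xc; rewrite in_setU => /orP [xy|/S3 [_ [c' c'p /andP [xc' yc']]]].
    have /flattenP [d dc xd] := hsrc _ _ xy.
    have [[_ _ _ cl] _] := hch _ dc.
    have yd := cl _ _ xd xy.
    have [d' d'p sub] := pm_cover dc.
    by rewrite (disj hUp cp d'p xc (sub _ xd)); apply: sub.
  by rewrite (disj hUp cp c'p xc xc').
move=> x y; rewrite in_setU => /orP [/hsrc|/S3 [_ [c' c'p /andP [xc' _]]]].
  by rewrite memf.
exact: mem_flat c'p xc'.
Qed.


Definition par (F : {set 'I_n * 'I_n}) w := exists u, (u, w) \in F.

Record J (E : {set 'I_n * 'I_n}) (Rt : seq 'I_n) (V : {set 'I_n}) (F : {set 'I_n * 'I_n}) : Prop := {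
  J1 : F \subset E;
  J2 : forall u u' w, (u, w) \in F -> (u', w) \in F -> u = u';
  J3 : forall r x, r \in Rt -> (x, r) \notin F;
  J4 : forall w, w \in V -> w \in Rt \/ par F w;
  J5 : forall x y, (x, y) \in F -> y \in V;
  J6 : forall r, r \in Rt -> r \in V }.

Record Jpre (E : {set 'I_n * 'I_n}) (Rt : seq 'I_n) (V : {set 'I_n}) (F : {set 'I_n * 'I_n}) u : Prop := {
  P1 : F \subset E;
  P2 : forall u u' w, (u, w) \in F -> (u', w) \in F -> u = u';
  P3 : forall r x, r \in Rt -> (x, r) \notin F;
  P4 : forall w, w \in V -> w \in Rt \/ par F w;
  P5 : forall x y, (x, y) \in F -> y \in V \/ y = u;
  P6 : forall r, r \in Rt -> r \in V \/ r = u;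
  P7 : u \notin V;
  P8 : u \in Rt \/ par F u }.

Lemma card_lt_n (V : {set 'I_n}) u : u \notin V -> (#|V| < n)%N.
Proof.
move=> uV; have := max_card (mem (u |: V)); rewrite card_ord.
by rewrite -[#|mem (u |: V)|]/#|u |: V| cardsU1 uV add1n.
Qed.

Lemma J_child E Rt V1 F1 u w : J E Rt V1 F1 -> u \in V1 -> (u, w) \in E -> w \notin V1 ->
  Jpre E Rt V1 ((u, w) |: F1) w.
Proof.
move=> [j1 j2 j3 j4 j5 j6] uV uw wV; split => //.
- by rewrite subUset sub1set uw j1.
- move=> a b w'; rewrite !in_setU1 => /orP [/eqP [ea ew]|h1] /orP [/eqP [eb ew']|h2].
  + by rewrite ea eb.
  + by move: (j5 _ _ h2); rewrite ew (negbTE wV).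
  + by move: (j5 _ _ h1); rewrite ew' (negbTE wV).
  + exact: j2 h1 h2.
- move=> r x rR; rewrite in_setU1 negb_or (j3 _ _ rR) andbT.
  by apply/eqP => [[_ e]]; move: (j6 _ rR); rewrite e (negbTE wV).
- move=> w' /j4 [h|[x h]]; [by left|by right; exists x; rewrite in_setU1 h orbT].
- move=> x y; rewrite in_setU1 => /orP [/eqP [_ ->]|/j5 h]; [by right|by left].
- by move=> r /j6 h; left.
- by right; exists u; rewrite setU11.
Qed.

Lemma visit_J E Rt : forall f u V F, Jpre E Rt V F u -> (n <= f + #|V|)%N ->
  J E Rt (visit A E f u (V, F)).1 (visit A E f u (V, F)).2 /\
  V \subset (visit A E f u (V, F)).1 /\ u \in (visit A E f u (V, F)).1.
Proof.
elim=> [|f IH] u V F P hf.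
  by have := card_lt_n (P7 P); rewrite ltnNge hf.
rewrite visitS /=.
have hV1 : (n <= f + #|u |: V|)%N by rewrite cardsU1 (P7 P) add1n addnS.
have loop : forall ws (V1 : {set 'I_n}) (F1 : {set 'I_n * 'I_n}),
    (forall w, w \in ws -> (u, w) \in E) -> J E Rt V1 F1 -> u |: V \subset V1 ->
    J E Rt (foldl (vstepf E f u) (V1, F1) ws).1 (foldl (vstepf E f u) (V1, F1) ws).2 /\
    V1 \subset (foldl (vstepf E f u) (V1, F1) ws).1.
  elim=> [|w ws IHw] V1 F1 hws hJ hsub /=; first by split.
  have uV1 : u \in V1 by apply: (subsetP hsub); rewrite setU11.
  have -> : vstepf E f u (V1, F1) w =
    (if w \in V1 then (V1, F1) else visit A E f w (V1, (u, w) |: F1)) by [].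
  case: ifP => wV1.
    by apply: IHw => // w' h; apply: hws; rewrite in_cons h orbT.
  have hP := J_child hJ uV1 (hws w (mem_head _ _)) (negbT wV1).
  have hf1 : (n <= f + #|V1|)%N.
    by apply: leq_trans hV1 _; rewrite leq_add2l; apply: subset_leq_card.
  have [hJ' [hs' _]] := IH w V1 ((u, w) |: F1) hP hf1.
  case: (visit A E f w (V1, (u, w) |: F1)) hJ' hs' => V2 F2 /= hJ' hs'.
  have [h1 h2] := IHw V2 F2 (fun w' h => hws w' (@mem_behead _ (w :: ws) w' h)) hJ' (subset_trans hsub hs').
  by split => //; apply: subset_trans hs' h2.
have hJ0 : J E Rt (u |: V) F.
  split; [exact: P1 P|exact: P2 P|exact: P3 P| | |].
  - move=> w; rewrite in_setU1 => /orP [/eqP ->|/(P4 P) //]; exact: P8 P.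
  - by move=> x y /(P5 P) [h|->]; rewrite in_setU1 ?h ?eqxx ?orbT.
  - by move=> r /(P6 P) [h|->]; rewrite in_setU1 ?h ?eqxx ?orbT.
have houts : forall w, w \in outs A E u -> (u, w) \in E.
  by move=> w; rewrite /outs mem_sort mem_filter mem_enum andbT.
have [h1 h2] := loop (outs A E u) (u |: V) F houts hJ0 (subxx _).
split => //; split.
  by apply: subset_trans h2; apply: subsetUr.
by apply: (subsetP h2); rewrite setU11.
Qed.

Lemma dfs_J E : forall L (V : {set 'I_n}) (F : {set 'I_n * 'I_n}) rs, J E rs V F -> uniq rs ->
  [/\ J E (foldl (dstep E) ((V, F), rs) L).2 (foldl (dstep E) ((V, F), rs) L).1.1
         (foldl (dstep E) ((V, F), rs) L).1.2,
      uniq (foldl (dstep E) ((V, F), rs) L).2,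
      forall l, l \in L -> l \in (foldl (dstep E) ((V, F), rs) L).1.1 &
      V \subset (foldl (dstep E) ((V, F), rs) L).1.1].
Proof.
elim=> [|l L IH] V F rs hJ hu /=; first by split.
have -> : dstep E ((V, F), rs) l =
  (if l \in V then ((V, F), rs) else (visit A E n l (V, F), rcons rs l)) by [].
case: ifP => lV.
  have [h1 h2 h3 h4] := IH V F rs hJ hu; split => // l'.
  by rewrite in_cons => /orP [/eqP ->|/h3 //]; apply: (subsetP h4).
case: hJ => j1 j2 j3 j4 j5 j6.
have hP : Jpre E (rcons rs l) V F l.
  split => //.
  - move=> r x; rewrite mem_rcons in_cons => /orP [/eqP ->|/j3 //].
    by apply/negP => /j5; rewrite lV.
  - by move=> w /j4 [h|h]; [left; rewrite mem_rcons in_cons h orbT|right].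
  - by move=> x y /j5 h; left.
  - by move=> r; rewrite mem_rcons in_cons => /orP [/eqP ->|/j6 h]; [right|left].
  - by rewrite lV.
  - by left; rewrite mem_rcons mem_head.
have [hJ' [hs' hl']] := visit_J hP (leq_addr _ _).
case: (visit A E n l (V, F)) hJ' hs' hl' => V2 F2 /= hJ' hs' hl'.
have hu' : uniq (rcons rs l).
  by rewrite rcons_uniq hu andbT; apply/negP => /j6; rewrite lV.
have [h1 h2 h3 h4] := IH V2 F2 (rcons rs l) hJ' hu'; split => //.
  by move=> l'; rewrite in_cons => /orP [/eqP ->|/h3 //]; apply: (subsetP h4).
exact: subset_trans hs' h4.
Qed.


Definition nb (x y : 'I_n) := (val y == (val x + 1) %% n)%N || ((val y + 1) %% n == val x)%N.

Lemma G_nb x y : (x, y) \in reach_one_graph A -> nb x y /\ A x < A y.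
Proof. by rewrite inE /= => /and3P [h1 _ h2]. Qed.

Lemma nb_sym x y : nb x y -> nb y x.
Proof. by rewrite /nb => /orP [/eqP ->|/eqP <-]; rewrite eqxx ?orbT. Qed.

Lemma modS (y : 'I_n) : ((val y + 1) %% n = if (val y).+1 == n then 0 else (val y).+1)%N.
Proof.
case: ifP => [/eqP h|h]; first by rewrite addn1 h modnn.
by rewrite addn1 modn_small //; have := ltn_ord y; rewrite leq_eqVlt h.
Qed.

Lemma modS_inj (a b : 'I_n) : ((val a + 1) %% n = (val b + 1) %% n)%N -> a = b.
Proof.
rewrite !modS => h; apply: val_inj.
move: h; case: ifP => [/eqP ha|ha]; case: ifP => [/eqP hb|hb] // h.
- by apply: succn_inj; rewrite ha hb.
- by case: h.
Qed.

Lemma nb3 x a b c : nb x a -> nb x b -> nb x c -> [\/ a = b, a = c | b = c].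
Proof.
rewrite /nb.
have t1 (u v : 'I_n) : (val u == (val x + 1) %% n)%N -> (val v == (val x + 1) %% n)%N -> u = v.
  by move=> /eqP h1 /eqP h2; apply: val_inj; rewrite /= h1 h2.
have t2 (u v : 'I_n) : ((val u + 1) %% n == val x)%N -> ((val v + 1) %% n == val x)%N -> u = v.
  by move=> /eqP h1 /eqP h2; apply: modS_inj; rewrite h1 h2.
case/orP => ha; case/orP => hb; case/orP => hc.
all: try (by constructor 1; eauto); try (by constructor 2; eauto); try (by constructor 3; eauto).
Qed.

Inductive reach (F : {set 'I_n * 'I_n}) : 'I_n -> 'I_n -> Prop :=
| rrefl x : reach F x x
| rstep x y z : reach F x y -> (y, z) \in F -> reach F x z.

Lemma reach_trans (F : {set 'I_n * 'I_n}) x y z : reach F x y -> reach F y z -> reach F x z.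
Proof. by move=> h1 h2; elim: h2 h1 => // a b c _ IH bc /IH h; apply: rstep h bc. Qed.

Lemma reach1 (F : {set 'I_n * 'I_n}) x y : (x, y) \in F -> reach F x y.
Proof. by move=> h; apply: rstep (rrefl _ _) h. Qed.

Lemma A_ind (P : 'I_n -> Prop) :
  (forall x, (forall y, A y < A x -> P y) -> P x) -> forall x, P x.
Proof.
move=> h x.
suff: forall k x, (#|[set z | (A z < A x)%R]| <= k)%N -> P x by apply; exact: leqnn.
elim=> [|k IH] {}x hk; apply: h => y hy.
  have : y \in [set z | A z < A x] by rewrite inE.
  by move: hk; rewrite leqn0 cards_eq0 => /eqP ->; rewrite inE.
apply: IH; rewrite -ltnS; apply: leq_trans hk; apply: proper_card; apply/properP; split.
  by apply/subsetP => z; rewrite !inE => hz; apply: lt_trans hz hy.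
by exists y; rewrite !inE ?hy ?ltxx.
Qed.

Lemma A_ind_up (P : 'I_n -> Prop) :
  (forall x, (forall y, A x < A y -> P y) -> P x) -> forall x, P x.
Proof.
move=> h x.
suff: forall k x, (#|[set z | (A x < A z)%R]| <= k)%N -> P x by apply; exact: leqnn.
elim=> [|k IH] {}x hk; apply: h => y hy.
  have : y \in [set z | A x < A z] by rewrite inE.
  by move: hk; rewrite leqn0 cards_eq0 => /eqP ->; rewrite inE.
apply: IH; rewrite -ltnS; apply: leq_trans hk; apply: proper_card; apply/properP; split.
  by apply/subsetP => z; rewrite !inE => hz; apply: lt_trans hy hz.
by exists y; rewrite !inE ?hy ?ltxx.
Qed.


Lemma reach_inv (F : {set 'I_n * 'I_n}) x z : reach F x z ->
  x = z \/ exists2 y, reach F x y & (y, z) \in F.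
Proof. by case => [w|a b c h1 h2]; [left|right; exists b]. Qed.

Section Forest.
Variables (F : {set 'I_n * 'I_n}) (roots : seq 'I_n).
Hypothesis hFG : F \subset reach_one_graph A.
Hypothesis hpu : forall u u' w, (u, w) \in F -> (u', w) \in F -> u = u'.
Hypothesis hroot : forall r x, r \in roots -> (x, r) \notin F.
Hypothesis hcov : forall w, w \in roots \/ par F w.
Hypothesis huniq : uniq roots.

Lemma F_lt x y : (x, y) \in F -> A x < A y.
Proof. by move=> h; case: (G_nb (subsetP hFG _ h)). Qed.

Lemma F_nb x y : (x, y) \in F -> nb x y.
Proof. by move=> h; case: (G_nb (subsetP hFG _ h)). Qed.

Lemma reach_le x y : reach F x y -> A x <= A y.
Proof.
elim=> // a b c _ h bc; apply: le_trans h _; exact: ltW (F_lt bc).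
Qed.

Lemma child_uniq p x a b : (p, x) \in F -> (x, a) \in F -> (x, b) \in F -> a = b.
Proof.
move=> px xa xb.
have ne y : (x, y) \in F -> y <> p.
  move=> xy e; have := F_lt px; have := F_lt xy; rewrite e => h1 h2.
  by move: (lt_trans h2 h1); rewrite ltxx.
case: (nb3 (F_nb xa) (F_nb xb) (nb_sym (F_nb px))) => // e.
  by case: (ne _ xa e).
by case: (ne _ xb e).
Qed.

Lemma reach_anc x y v : reach F x v -> reach F y v -> reach F x y \/ reach F y x.
Proof.
move=> h; elim: h y => [z|a b c hab IH bc] y hy; first by right.
case: (reach_inv hy) => [e|[d yd dc]]; first by left; rewrite e; apply: rstep hab bc.
by rewrite (hpu dc bc) in yd; apply: IH.
Qed.

Lemma reach_root_eq r r' v : r \in roots -> r' \in roots ->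
  reach F r v -> reach F r' v -> r = r'.
Proof.
move=> rR r'R h h'; case: (reach_anc h h') => /reach_inv [//|[y _ yr]].
  by move: (hroot y r'R); rewrite yr.
by move: (hroot y rR); rewrite yr.
Qed.

Lemma root_of v : exists2 r, r \in roots & reach F r v.
Proof.
elim/A_ind: v => v IH; case: (hcov v) => [vR|[u uv]]; first by exists v => //; apply: rrefl.
have [r rR ru] := IH u (F_lt uv); exists r => //; exact: rstep ru uv.
Qed.

Lemma children_mem r y : (y \in children F r) = ((r, y) \in F).
Proof. by rewrite mem_filter mem_enum andbT. Qed.

Lemma minchild_one x c : (forall w, ((x, w) \in F) = (w == c)) -> minchild A F x = Some c.
Proof.
move=> h; rewrite /minchild /children (eq_filter (a2 := pred1 c)) //.
by rewrite filter_pred1_uniq ?enum_uniq ?mem_enum.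
Qed.

Lemma minchild_none x : (forall w, (x, w) \notin F) -> minchild A F x = None.
Proof.
move=> h; rewrite /minchild /children (eq_filter (a2 := pred0)); first by rewrite filter_pred0.
by move=> w /=; apply/negbTE.
Qed.

Lemma desc x : par F x -> exists t, [/\ path le x t, uniq (x :: t), pairs (x :: t) \subset F,
  (forall y, y \in x :: t <-> reach F x y) & Hnext (minchild A F) (x :: t)].
Proof.
elim/A_ind_up: x => x IH [p px].
case: (pickP (fun c => (x, c) \in F)) => [c xc|none].
  have hc : par F c by exists x.
  have [t [h1 h2 h3 h4 h5]] := IH c (F_lt xc) hc.
  exists (c :: t); split.
  - by rewrite /= /leA (ltW (F_lt xc)).
  - rewrite cons_uniq h2 andbT; apply/negP => xin.
    by have := reach_le ((h4 x).1 xin); rewrite leNgt (F_lt xc).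
  - by rewrite pairs_cons2 subUset sub1set xc h3.
  - move=> y; split.
      rewrite in_cons => /orP [/eqP ->|yct]; first exact: rrefl.
      exact: reach_trans (reach1 xc) ((h4 y).1 yct).
    have key a b : reach F a b -> a = x -> b \in [:: x, c & t].
      elim=> [z ->|a' b' d hab IHr bd ax]; first by rewrite mem_head.
      have := IHr ax; rewrite in_cons => /orP [/eqP bx|bct].
        by rewrite bx in bd; rewrite (child_uniq px bd xc) in_cons mem_head orbT.
      by rewrite in_cons (h4 d).2 ?orbT //; apply: rstep ((h4 b').1 bct) bd.
    by move=> hr; apply: key hr _.
  - move=> [|a pre] y t' /=.
      case=> <- <- /=; apply: minchild_one => w.
      by apply/idP/eqP => [xw|->//]; exact: child_uniq px xw xc.
    by case=> _ e; apply: h5 e.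
exists [::]; split => //.
- by rewrite sub0set.
- move=> y; split; first by rewrite inE => /eqP ->; apply: rrefl.
  have key a b : reach F a b -> a = x -> b = x.
    elim=> // a' b' d hab IHr bd ax.
    by move: (none d); rewrite -(IHr ax) bd.
  by move=> hr; rewrite inE (key _ _ hr).
- move=> [|a pre] y t' /=.
    case=> <- <-; apply: minchild_none => w; by rewrite none.
  by case=> _; case: pre.
Qed.


Definition Mr r : {set 'I_n * 'I_n} :=
  match children F r with
  | [:: a1; b1] => mchain A (minchild A F) (minchild A F) n a1 b1 set0
  | _ => set0
  end.

Lemma no_reach_sib r a b : (r, a) \in F -> (r, b) \in F -> a != b -> ~ reach F a b.
Proof.
move=> ra rb ab /reach_inv [e|[d ad db]]; first by move: ab; rewrite e eqxx.
have e := hpu db rb; rewrite e in ad.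
by have := reach_le ad; rewrite leNgt (F_lt ra).
Qed.

Lemma root_chain r : r \in roots -> exists c,
  [/\ head x0 c = r, sorted le c, uniq c & forall y, y \in c <-> reach F r y] /\
  pairs c \subset F :|: Mr r /\
  (forall e, e \in Mr r -> [/\ A e.1 < A e.2, reach F r e.1 & reach F r e.2]).
Proof.
move=> rR; rewrite /Mr.
have hu : uniq (children F r) by apply: filter_uniq; apply: enum_uniq.
have chm := children_mem r.
case E: (children F r) hu chm => [|a [|b [|c' t']]] hu chm.
- exists [:: r]; split; [split => // y|split; [by rewrite sub0set|by move=> e; rewrite inE]].
  split; first by rewrite inE => /eqP ->; apply: rrefl.
  have key a b : reach F a b -> a = r -> b = r.
    elim=> // a' b' d hab IHr bd ar.
    by move: (chm d); rewrite -(IHr ar) bd.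
  by move=> hr; rewrite inE (key _ _ hr).
- have ra : (r, a) \in F by rewrite -chm mem_head.
  have [t [h1 h2 h3 h4 h5]] := desc (ex_intro _ r ra).
  exists [:: r, a & t]; split; last split.
  + split => //.
    * by rewrite /= /leA (ltW (F_lt ra)).
    * rewrite cons_uniq h2 andbT; apply/negP => rin.
      by have := reach_le ((h4 r).1 rin); rewrite leNgt (F_lt ra).
    move=> y; split.
      rewrite in_cons => /orP [/eqP ->|yat]; first exact: rrefl.
      exact: reach_trans (reach1 ra) ((h4 y).1 yat).
    have key a0 b0 : reach F a0 b0 -> a0 = r -> b0 \in [:: r, a & t].
      elim=> [z ->|a' b' d hab IHr bd ar]; first by rewrite mem_head.
      have := IHr ar; rewrite in_cons => /orP [/eqP br|bat].
        by move: (chm d); rewrite -br bd inE => /eqP ->; rewrite in_cons mem_head orbT.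
      by rewrite in_cons (h4 d).2 ?orbT //; apply: rstep ((h4 b').1 bat) bd.
    by move=> hr; apply: key hr _.
  + by rewrite setU0 pairs_cons2 subUset sub1set ra h3.
  + by move=> e; rewrite inE.
- have ra : (r, a) \in F by rewrite -chm mem_head.
  have rb : (r, b) \in F by rewrite -chm in_cons mem_head orbT.
  have ab : a != b by move: hu; rewrite /= inE andbT.
  have [ta [ha1 ha2 ha3 ha4 ha5]] := desc (ex_intro _ r ra).
  have [tb [hb1 hb2 hb3 hb4 hb5]] := desc (ex_intro _ r rb).
  have disjab : forall x y, x \in a :: ta -> y \in b :: tb -> x != y.
    move=> x y xa yb; apply/eqP => exy; rewrite -exy in yb.
    have := (ha4 x).1 xa; have := (hb4 x).1 yb => hb ha.
    case: (reach_anc ha hb) => h.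
      exact: no_reach_sib ra rb ab h.
    by apply: no_reach_sib rb ra _ h; rewrite eq_sym.
  have uab : uniq ((a :: ta) ++ (b :: tb)).
    rewrite cat_uniq ha2 hb2 andbT; apply/negP => /hasP [y yb ya].
    by move: (disjab y y ya yb); rewrite eqxx.
  set m := merge le (a :: ta) (b :: tb).
  have memm y : (y \in m) = (y \in (a :: ta) ++ (b :: tb)) by rewrite /m mem_merge.
  have reachm y : y \in m -> reach F r y.
    rewrite memm mem_cat => /orP [ya|yb].
      exact: reach_trans (reach1 ra) ((ha4 y).1 ya).
    exact: reach_trans (reach1 rb) ((hb4 y).1 yb).
  have rnm : r \notin m.
    apply/negP; rewrite memm mem_cat => /orP [ya|yb].
      by have := reach_le ((ha4 r).1 ya); rewrite leNgt (F_lt ra).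
    by have := reach_le ((hb4 r).1 yb); rewrite leNgt (F_lt rb).
  have [hd [rest [em hhd]]] : exists hd rest, m = hd :: rest /\ (hd = a \/ hd = b).
    by rewrite /m merge_cons2; case: ifP => _; eexists; eexists; split; eauto.
  have hf : (size ta + size tb < n)%N.
    have := size_uniq_le (s := r :: m); rewrite /= rnm /m merge_uniq uab size_merge.
    by rewrite size_cat /= addSn addnS => /(_ isT) /ltnW /ltnW.
  have MP := mchain_pairs set0 ha5 hb5 disjab hf.
  exists (r :: m); split; last split.
  + split => //.
    * rewrite /= (path_sortedE le_trans_A); apply/andP; split.
        by apply/allP => y /reachm /reach_le.
      by apply: merge_sorted => //; exact: le_total_A.
    * by rewrite cons_uniq rnm /m merge_uniq uab.
    move=> y; split.
      by rewrite in_cons => /orP [/eqP ->|/reachm //]; apply: rrefl.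
    have key a0 b0 : reach F a0 b0 -> a0 = r -> b0 \in r :: m.
      elim=> [z ->|a' b' d hab IHr bd ar]; first by rewrite mem_head.
      have := IHr ar; rewrite in_cons => /orP [/eqP br|bm].
        move: (chm d); rewrite -br bd !inE => /orP [/eqP ->|/eqP ->].
          by rewrite memm mem_head orbT.
        by rewrite memm mem_cat mem_head !orbT.
      rewrite in_cons memm mem_cat; move: bm; rewrite memm mem_cat => /orP [ba|bb].
        by rewrite (ha4 d).2 ?orbT //; apply: rstep ((ha4 b').1 ba) bd.
      by rewrite (hb4 d).2 ?orbT //; apply: rstep ((hb4 b').1 bb) bd.
    by move=> hr; apply: key hr _.
  + rewrite em pairs_cons2 -em subUset sub1set; apply/andP; split.
      by case: hhd => ->; rewrite in_setU ?ra ?rb.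
    apply: subset_trans MP _; apply: setSU; rewrite subUset.
    by rewrite ha3 hb3.
  + move=> e he; case: (mchain_arcs ha5 hb5 disjab he) => [|[h1 h2 h3]]; first by rewrite inE.
    by split => //; apply: reachm; rewrite memm.
- exfalso.
  have ra : (r, a) \in F by rewrite -chm mem_head.
  have rb : (r, b) \in F by rewrite -chm !in_cons eqxx !orbT.
  have rc : (r, c') \in F by rewrite -chm !in_cons eqxx !orbT.
  move: hu; rewrite /= !inE !negb_or => /andP [/and3P [ab ac _] /andP [/andP [bc _] _]].
  case: (nb3 (F_nb ra) (F_nb rb) (F_nb rc)) => e.
  + by move: ab; rewrite e eqxx.
  + by move: ac; rewrite e eqxx.
  + by move: bc; rewrite e eqxx.
Qed.

Lemma Mprop r e : r \in roots -> e \in Mr r -> [/\ A e.1 < A e.2, reach F r e.1 & reach F r e.2].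
Proof. by move=> rR; have [c [_ [_ h]]] := root_chain rR; apply: h. Qed.

Definition RC c := [/\ forall y, y \in c <-> reach F (head x0 c) y, sorted le c, uniq c,
  pairs c \subset F :|: Mr (head x0 c) & head x0 c \in roots].

Lemma chains_exist : forall rs, {subset rs <= roots} -> uniq rs -> exists cs,
  [/\ map (head x0) cs = rs, uniq (flatten cs) & forall c, c \in cs -> RC c].
Proof.
elim=> [|r rs IH] sub hu; first by exists [::].
have rR : r \in roots by apply: sub; rewrite mem_head.
move: hu; rewrite cons_uniq => /andP [rrs urs].
have [cs [h1 h2 h3]] := IH (fun x h => sub x (@mem_behead _ (r :: rs) x h)) urs.
have [c [[c1 c2 c3 c4] [c5 _]]] := root_chain rR.
exists (c :: cs); split.
- by rewrite /= c1 h1.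
- rewrite /= cat_uniq c3 h2 andbT; apply/negP => /hasP [y /flattenP [c' c'cs yc'] yc].
  have [r1 _ _ _ r5] := h3 c' c'cs.
  have hr := reach_root_eq rR r5 ((c4 y).1 yc) ((r1 y).1 yc').
  by move: rrs; rewrite hr -h1 map_f.
move=> c'; rewrite in_cons => /orP [/eqP ->|/h3 //].
by split => //; rewrite c1.
Qed.

Lemma Inv_H : exists cs, map (head x0) cs = roots /\ Inv (merge_subtrees A F roots) cs.
Proof.
have [cs [h1 h2 h3]] := chains_exist (fun x h => h) huniq.
exists cs; split => //.
have msa : merge_subtrees_arcs A F roots = \bigcup_(r <- roots) Mr r by [].
have memH e : e \in merge_subtrees A F roots ->
    e \in F \/ exists2 r, r \in roots & e \in Mr r.
  rewrite /merge_subtrees in_setU msa mem_bigcup_seq => /orP [h|/hasP h]; by [left|right].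
have MrH r : r \in roots -> Mr r \subset merge_subtrees A F roots.
  move=> rR; apply/subsetP => e he; rewrite /merge_subtrees in_setU msa mem_bigcup_seq.
  by apply/orP; right; apply/hasP; exists r.
split => //.
- move=> x y /memH [/F_lt //|[r rR /(Mprop rR) [] //]].
- move=> c cc; have [r1 r2 r3 r4 r5] := h3 c cc; split; last first.
    by apply/negP => /eqP c0; have := (r1 (head x0 c)).2 (rrefl _ _); rewrite c0.
  split => //.
    apply: subset_trans r4 _; rewrite subUset MrH // andbT.
    by rewrite /merge_subtrees subsetUl.
  move=> x y xc /memH [xy|[r' r'R /(Mprop r'R) [_ hx hy]]].
    by apply/r1; apply: rstep xy; apply/r1.
  have e := reach_root_eq r5 r'R ((r1 x).1 xc) hx.
  by apply/r1; rewrite e.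
- move=> x y _; have [r rR hr] := root_of x.
  rewrite -h1 in rR; case/mapP: rR => c cc er; rewrite er in hr.
  have [hc _ _ _ _] := h3 c cc; exact: mem_flat cc ((hc x).2 hr).
Qed.

End Forest.

Lemma main_sec (L : seq 'I_n) :
  perm_eq L (enum 'I_n) ->
  let G := reach_one_graph A in
  let FR := dfs_forest A G L in
  let HR := merge_step A (merge_subtrees A FR.1 FR.2) FR.2 in
  let F' := (dfs_forest A HR.1 HR.2).1 in
  let H'R' := merge_step A F' HR.2 in
  all_components_dipaths (dfs_forest A H'R'.1 H'R'.2).1.
Proof.
move=> hL G FR HR F' H'R'.
rewrite /H'R' /F' /HR /FR /G.
set fr := foldl (dstep (reach_one_graph A)) ((set0, set0), [::]) L.
have J0 : J (reach_one_graph A) [::] set0 set0.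
  split => //; first by rewrite sub0set.
  - by move=> u u' w; rewrite inE.
  - by move=> w; rewrite inE.
  - by move=> x y; rewrite inE.
have [hJ hu hall _] := @dfs_J (reach_one_graph A) L set0 set0 [::] J0 isT.
rewrite -/fr in hJ hu hall.
have e1 : (dfs_forest A (reach_one_graph A) L).1 = fr.1.2 by [].
have e2 : (dfs_forest A (reach_one_graph A) L).2 = fr.2 by [].
rewrite e1 e2.
have hcov : forall w, w \in fr.2 \/ par fr.1.2 w.
  by move=> w; apply: (J4 hJ); apply: hall; rewrite (perm_mem hL) mem_enum.
have [cs [hcs Ics]] := Inv_H (J1 hJ) (J2 hJ) (J3 hJ) hcov hu.
rewrite -hcs; rewrite -hcs in Ics.
have [m1 I1] := merge_step_Inv Ics.
rewrite m1 (dfs_chains I1).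
have I2 := Inv_forest I1.
have [m2 I3] := merge_step_Inv I2.
rewrite m2 (dfs_chains I3).
exact: dipaths (Inv_forest I3).
Qed.

End Proof.

Unset Implicit Arguments.

Theorem corollary4 (R : realType) (n : nat) (A : 'I_n -> R) (L : seq 'I_n) :
  injective A ->
  perm_eq L (enum 'I_n) ->
  let G := reach_one_graph A in
  let FR := dfs_forest A G L in                      (* F and its roots *)
  let HR := merge_step A (merge_subtrees A FR.1 FR.2) FR.2 in   (* H, R *)
  let F' := (dfs_forest A HR.1 HR.2).1 in
  let H'R' := merge_step A F' HR.2 in          (* H', R' *)
  all_components_dipaths (dfs_forest A H'R'.1 H'R'.2).1.
Proof.
move=> injA hL G FR HR F' H'R' v.
exact: (main_sec injA v hL v).
Qed.
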